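(* Consider the Cucker–Smale model with bonding force $$\dot{\mathbf{x}}_i=\mathbf{v}_i,\qquad \dot{\mathbf{v}}_i=\frac{\kappa_0}{N}\sum_{j=1}^N\psi(\|\mathbf{x}_j-\mathbf{x}_i\|)(\mathbf{v}_j-\mathbf{v}_i)+\frac{\kappa_1}{N}\sum_{j\ne i}\Big\langle\mathbf{v}_j-\mathbf{v}_i,\frac{\mathbf{x}_j-\mathbf{x}_i}{\|\mathbf{x}_j-\mathbf{x}_i\|}\Big\rangle\frac{\mathbf{x}_j-\mathbf{x}_i}{\|\mathbf{x}_j-\mathbf{x}_i\|}+\frac{\kappa_2}{N}\sum_{j\ne i}\big(\|\mathbf{x}_j-\mathbf{x}_i\|-d^\infty_{ij}\big)\frac{\mathbf{x}_j-\mathbf{x}_i}{\|\mathbf{x}_j-\mathbf{x}_i\|}.$$ Suppose $$\min_{i\ne j}\|\mathbf{x}_i^0-\mathbf{x}_j^0\|>0,\quad \min_{i\ne j}d^\infty_{ij}>\sqrt{\frac{2NE(0)}{\kappa_2}},\quad (X^0,V^0)\in S,\quad \kappa_0>0,\ \kappa_1>0,\ \kappa_2>0,$$ and let $\{(\mathbf{x}_i,\mathbf{v}_i)\}$ be a global smooth solution. Then: (i) $\sup_{0\le t<\infty}\max_{i,j}\|\mathbf{x}_i(t)-\mathbf{x}_j(t)\|<\infty$ and $\lim_{t\to\infty}\max_{i,j}\|\mathbf{v}_j(t)-\mathbf{v}_i(t)\|=0$; (ii) if $\sum_{i=1}^N\mathbf{v}_i^0=0$, then $\lim_{t\to\infty}\max_{1\le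 i\le N}\|\mathbf{v}_i(t)\|=0$.
   Context: $N\ge2$, $d\ge1$, Euclidean norm and inner product on $\mathbb{R}^d$; $[d^\infty_{ij}]$ real symmetric with zero diagonal; $(X^0,V^0)=(\mathbf{x}_i(0),\mathbf{v}_i(0))_i$. $E:=\frac12\sum_i\|\mathbf{v}_i\|^2+\frac{\kappa_2}{4N}\sum_{i,j}(\|\mathbf{x}_j-\mathbf{x}_i\|-d^\infty_{ij})^2$. $U:=\max_{i\ne j}d^\infty_{ij}+\sqrt{2NE(0)/\kappa_2}$, $S:=\{(X,V)\in\mathbb{R}^{2dN}:\max_{i\ne j}\|\mathbf{x}_i-\mathbf{x}_j\|\le U\}$. The weight $\psi:[0,\infty)\to[0,\infty)$ is locally Lipschitz with $0\le\psi(r)\le\psi_M$ for all $r\ge0$ and $\psi_m:=\min_{r\in[0,U]}\psi(r)>0$. A global smooth solution is a $C^1$ solution on $[0,\infty)$ with $\mathbf{x}_i(t)\ne\mathbf{x}_j(t)$ for $i\ne j$. *)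

(* Defs.v *)
From HB Require Import structures.
From mathcomp Require Import all_boot all_order all_algebra.
From mathcomp Require Import all_classical all_reals all_analysis.
Set Implicit Arguments. Unset Strict Implicit. Unset Printing Implicit Defensive.
Import Order.TTheory GRing.Theory Num.Theory.
Import numFieldNormedType.Exports.
Local Open Scope ring_scope.

Definition einner (R : realType) (d : nat) (u w : 'rV[R]_d) : R :=
  \sum_(k < d) u 0 k * w 0 k.
Definition enorm (R : realType) (d : nat) (u : 'rV[R]_d) : R :=
  Num.sqrt (einner u u).

Definition cs_force (R : realType) (N d : nat) (psi : R -> R)
  (k0 k1 k2 : R) (dinf : 'I_N -> 'I_N -> R)
  (X V : 'I_N -> 'rV[R]_d) (i : 'I_N) : 'rV[R]_d :=
  let e j := (enorm (X j - X i))^-1 *: (X j - X i) in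
  (k0 / N%:R) *: (\sum_(j < N) psi (enorm (X j - X i)) *: (V j - V i))
  + (k1 / N%:R) *: (\sum_(j < N | j != i) einner (V j - V i) (e j) *: e j)
  + (k2 / N%:R) *: (\sum_(j < N | j != i)
                      (enorm (X j - X i) - dinf i j) *: e j).

Definition cs_energy (R : realType) (N d : nat) (k2 : R)
  (dinf : 'I_N -> 'I_N -> R) (X V : 'I_N -> 'rV[R]_d) : R :=
  2^-1 * (\sum_(i < N) enorm (V i) ^+ 2)
  + (k2 / (4 * N%:R)) *
      (\sum_(i < N) \sum_(j < N) (enorm (X j - X i) - dinf i j) ^+ 2).

Definition cs_U (R : realType) (N d : nat) (k2 : R)
  (dinf : 'I_N -> 'I_N -> R) (X0 V0 : 'I_N -> 'rV[R]_d) : R :=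
  \big[Num.max/0]_(i < N) \big[Num.max/0]_(j < N | i != j) dinf i j
  + Num.sqrt (2 * N%:R * cs_energy k2 dinf X0 V0 / k2).

Definition in_S (R : realType) (N d : nat) (U : R) (X : 'I_N -> 'rV[R]_d) :
  Prop := forall i j : 'I_N, i != j -> enorm (X i - X j) <= U.

Definition loc_lipschitz0 (R : realType) (psi : R -> R) : Prop :=
  forall b : R, exists L : R, forall r s : R,
    0 <= r <= b -> 0 <= s <= b -> `|psi r - psi s| <= L * `|r - s|.

Definition global_smooth_solution (R : realType) (N d : nat) (psi : R -> R)
  (k0 k1 k2 : R) (dinf : 'I_N -> 'I_N -> R)
  (x v : 'I_N -> R -> 'rV[R]_d) : Prop :=
  forall t : R, 0 <= t ->
    (forall i : 'I_N, is_derive t 1 (x i) (v i t)) /\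
    (forall i : 'I_N, is_derive t 1 (v i)
        (cs_force psi k0 k1 k2 dinf (fun j => x j t) (fun j => v j t) i)) /\
    (forall i j : 'I_N, i != j -> x i t != x j t).

Definition max_pair (R : realType) (N d : nat) (F : 'I_N -> 'rV[R]_d) : R :=
  \big[Num.max/0]_(i < N) \big[Num.max/0]_(j < N) enorm (F j - F i).
Definition max_one (R : realType) (N d : nat) (F : 'I_N -> 'rV[R]_d) : R :=
  \big[Num.max/0]_(i < N) enorm (F i).

(* Main.v *)
Require Import Defs.
From HB Require Import structures.
From mathcomp Require Import all_boot all_order all_algebra.
From mathcomp Require Import all_classical all_reals all_analysis.
From mathcomp Require Import ring lra.
Import Order.TTheory GRing.Theory Num.Theory.
Import numFieldNormedType.Exports.
Local Open Scope classical_set_scope.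
Local Open Scope ring_scope.
Set Implicit Arguments. Unset Strict Implicit. Unset Printing Implicit Defensive.

Section Deriv.
Variable R : realType.
Implicit Types (f g : R -> R) (t : R).

Lemma dD f g df dg t : is_derive t 1 f df -> is_derive t 1 g dg ->
  is_derive t 1 (fun s => f s + g s) (df + dg).
Proof. exact: is_deriveD. Qed.

Lemma dB f g df dg t : is_derive t 1 f df -> is_derive t 1 g dg ->
  is_derive t 1 (fun s => f s - g s) (df - dg).
Proof. exact: is_deriveB. Qed.

Lemma dM f g df dg t : is_derive t 1 f df -> is_derive t 1 g dg ->
  is_derive t 1 (fun s => f s * g s) (f t * dg + g t * df).
Proof. move=> H1 H2; exact: (is_deriveM H1 H2). Qed.

Lemma dZ f df (k : R) t : is_derive t 1 f df ->
  is_derive t 1 (fun s => k * f s) (k * df).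
Proof. move=> H; exact: (is_deriveZ k H). Qed.

Lemma dC (k : R) t : is_derive t 1 (fun _ => k) 0.
Proof. exact: is_derive_cst. Qed.

Lemma dS n (h : 'I_n -> R -> R) dh t : (forall i, is_derive t 1 (h i) (dh i)) ->
  is_derive t 1 (fun s => \sum_(i < n) h i s) (\sum_(i < n) dh i).
Proof. move=> H; rewrite -fct_sumE; exact: is_derive_sum. Qed.

Lemma dsqrt f df t : 0 < f t -> is_derive t 1 f df ->
  is_derive t 1 (fun s => Num.sqrt (f s)) ((2 * Num.sqrt (f t))^-1 * df).
Proof. move=> H1 H2. have := is_derive1_sqrt H1. move=> H3.
exact: (@is_derive1_comp _ Num.sqrt f t _ _ H3 H2). Qed.

Lemma dcomp_mx (d : nat) (a : R -> 'rV[R]_d) da t k :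
  is_derive t 1 a da -> is_derive t 1 (fun s => a s 0 k) (da 0 k).
Proof.
move=> [H1 H2]. have H3 := H1; move/derivable_mxP: H3 => H3.
apply: DeriveDef; first exact: H3.
by rewrite -H2 derive_mx // mxE.
Qed.

End Deriv.

Section Inner.
Variables (R : realType) (d : nat).
Implicit Types u w z : 'rV[R]_d.

Lemma einnerC u w : einner u w = einner w u.
Proof. by rewrite /einner; apply: eq_bigr => k _; rewrite mulrC. Qed.

Lemma einnerDl u w z : einner (u + w) z = einner u z + einner w z.
Proof. by rewrite /einner -big_split; apply: eq_bigr => k _; rewrite !mxE mulrDl. Qed.

Lemma einnerDr u w z : einner z (u + w) = einner z u + einner z w.
Proof. by rewrite einnerC einnerDl !(einnerC z). Qed.

Lemma einnerNl u w : einner (- u) w = - einner u w.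
Proof. by rewrite /einner -sumrN; apply: eq_bigr => k _; rewrite !mxE mulNr. Qed.

Lemma einnerNr u w : einner w (- u) = - einner w u.
Proof. by rewrite einnerC einnerNl einnerC. Qed.

Lemma einnerBl u w z : einner (u - w) z = einner u z - einner w z.
Proof. by rewrite einnerDl einnerNl. Qed.

Lemma einnerBr u w z : einner z (u - w) = einner z u - einner z w.
Proof. by rewrite einnerDr einnerNr. Qed.

Lemma einnerZl (c : R) u w : einner (c *: u) w = c * einner u w.
Proof. by rewrite /einner mulr_sumr; apply: eq_bigr => k _; rewrite !mxE mulrA. Qed.

Lemma einnerZr (c : R) u w : einner w (c *: u) = c * einner w u.
Proof. by rewrite einnerC einnerZl einnerC. Qed.

Lemma einner0l w : einner 0 w = 0.
Proof. by rewrite /einner big1 // => k _; rewrite mxE mul0r. Qed.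

Lemma einner0r w : einner w 0 = 0.
Proof. by rewrite einnerC einner0l. Qed.

Lemma einner_suml n (F : 'I_n -> 'rV[R]_d) w :
  einner (\sum_(j < n) F j) w = \sum_(j < n) einner (F j) w.
Proof.
elim/big_rec2: _ => [|j a b _ <-]; first exact: einner0l.
by rewrite einnerDl.
Qed.

Lemma einner_sumr n (F : 'I_n -> 'rV[R]_d) w :
  einner w (\sum_(j < n) F j) = \sum_(j < n) einner w (F j).
Proof. by rewrite einnerC einner_suml; apply: eq_bigr => j _; rewrite einnerC. Qed.

Lemma einner_ge0 u : 0 <= einner u u.
Proof. by apply: sumr_ge0 => k _; rewrite -expr2 sqr_ge0. Qed.

Lemma einner_eq0 u : (einner u u == 0) = (u == 0).
Proof.
apply/idP/idP; last by move/eqP->; rewrite einner0l.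
rewrite /einner psumr_eq0; last by move=> k _; rewrite -expr2 sqr_ge0.
move/allP => H; apply/eqP/matrixP => i k; rewrite mxE (ord1 i).
have := H k (mem_index_enum k); rewrite -expr2 sqrf_eq0 => /eqP ->//.
Qed.

Lemma einner_gt0 u : u != 0 -> 0 < einner u u.
Proof. by move=> H; rewrite lt_def einner_ge0 andbT einner_eq0. Qed.

Lemma enorm_ge0 u : 0 <= enorm u.
Proof. exact: sqrtr_ge0. Qed.

Lemma enorm_sq u : enorm u ^+ 2 = einner u u.
Proof. by rewrite /enorm sqr_sqrtr // einner_ge0. Qed.

Lemma enormN u : enorm (- u) = enorm u.
Proof. by rewrite /enorm einnerNl einnerNr opprK. Qed.

Lemma enorm0 : enorm (0 : 'rV[R]_d) = 0.
Proof. by rewrite /enorm einner0l sqrtr0. Qed.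

Lemma einner_amgm u w : 2 * `|einner u w| <= einner u u + einner w w.
Proof.
have h1 := einner_ge0 (u - w). have h2 := einner_ge0 (u + w).
rewrite einnerBl !einnerBr einnerDl !einnerDr (einnerC w u) in h1 h2.
move: h1 h2; set a := einner u u; set b := einner u w; set c := einner w w.
move=> h1 h2.
case: (lerP 0 b) => H; [rewrite ger0_norm // | rewrite ltr0_norm //]; lra.
Qed.

Lemma einner_sub_le u w : einner (u - w) (u - w) <= 2 * einner u u + 2 * einner w w.
Proof.
have h2 := einner_ge0 (u + w).
rewrite einnerBl !einnerBr einnerDl !einnerDr (einnerC w u) in h2 *.
move: h2; set a := einner u u; set b := einner u w; set c := einner w w.
move=> h2; lra.
Qed.

Lemma einner_add_le u w : einner (u + w) (u + w) <= 2 * einner u u + 2 * einner w w.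
Proof.
have h2 := einner_ge0 (u - w).
rewrite einnerBl !einnerBr einnerDl !einnerDr (einnerC w u) in h2 *.
move: h2; set a := einner u u; set b := einner u w; set c := einner w w.
move=> h2; lra.
Qed.

Lemma einner_Z2 (c : R) u : einner (c *: u) (c *: u) = c ^+ 2 * einner u u.
Proof. by rewrite einnerZl einnerZr mulrA expr2. Qed.

Lemma einner_sum_le n (F : 'I_n -> 'rV[R]_d) b :
  (forall j, einner (F j) (F j) <= b) ->
  einner (\sum_(j < n) F j) (\sum_(j < n) F j) <= n%:R ^+ 2 * b.
Proof.
move=> H.
rewrite einner_suml.
have -> : n%:R ^+ 2 * b = \sum_(j < n) \sum_(l < n) b.
  rewrite !big_const_ord !iter_addr !addr0 -mulr_natr -mulrnA.
  by rewrite -[b *+ _]mulr_natr natrM; ring.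
apply: ler_sum => j _; rewrite einner_sumr; apply: ler_sum => l _.
have := einner_amgm (F j) (F l). have := H j; have := H l.
have := ler_norm (einner (F j) (F l)).
set a := einner (F j) (F l); set p := einner (F j) (F j); set q := einner (F l) (F l).
move=> *; lra.
Qed.

End Inner.

Section VD.
Variables (R : realType) (d : nat).
Implicit Types (a b : R -> 'rV[R]_d) (t : R).

Lemma dvB a b da db t : is_derive t 1 a da -> is_derive t 1 b db ->
  is_derive t 1 (fun s => a s - b s) (da - db).
Proof. exact: is_deriveB. Qed.

Lemma dinner a b da db t : is_derive t 1 a da -> is_derive t 1 b db ->
  is_derive t 1 (fun s => einner (a s) (b s)) (einner (a t) db + einner da (b t)).
Proof.
move=> Ha Hb; rewrite /einner -big_split /=.
apply: dS => k.
apply: is_derive_eq; first exact: dM (dcomp_mx k Ha) (dcomp_mx k Hb).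
by rewrite mulrC (mulrC (b t 0 k)).
Qed.

Lemma denorm a da t : a t != 0 -> is_derive t 1 a da ->
  is_derive t 1 (fun s => enorm (a s)) (einner (a t) da / enorm (a t)).
Proof.
move=> Hn Ha; rewrite /enorm.
have Hp := einner_gt0 Hn.
apply: is_derive_eq; first exact: dsqrt Hp (dinner Ha Ha).
rewrite (einnerC da).
have hs : Num.sqrt (einner (a t) (a t)) != 0 by rewrite gt_eqF // sqrtr_gt0.
move: hs; set s := Num.sqrt _; set e := einner (a t) da => hs.
by field.
Qed.

Lemma is_derive_cont (f : R -> R) df t : is_derive t 1 f df -> {for t, continuous f}.
Proof. by move=> [H _]; apply/differentiable_continuous/derivable1_diffP. Qed.

Lemma mvt0 (f df : R -> R) (a b0 : R) : 0 <= a -> a <= b0 ->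
  (forall s : R, 0 <= s -> is_derive s 1 f (df s)) ->
  exists2 c, a <= c <= b0 & f b0 - f a = df c * (b0 - a).
Proof.
move=> H0 Hab Hd.
have [||c Hc Heq] := @MVT_segment R f df a b0 Hab.
- move=> s; rewrite in_itv /= => /andP[H1 _]; apply: Hd; lra.
- apply: continuous_in_subspaceT => s; rewrite inE /= in_itv /= => /andP[H1 _].
  apply: is_derive_cont; apply: Hd; lra.
by exists c => //; move: Hc; rewrite in_itv.
Qed.

End VD.

Section Alg.
Variables (R : realType) (N d : nat).
Implicit Types (X V : 'I_N -> 'rV[R]_d).

Lemma symm_sum (a : 'I_N -> 'I_N -> R) (u : 'I_N -> 'I_N -> 'rV[R]_d) V :
  (forall i j, a i j = a j i) -> (forall i j, u j i = - u i j) ->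
  \sum_i \sum_j a i j * einner (V i) (u i j) =
  - 2^-1 * \sum_i \sum_j a i j * einner (V j - V i) (u i j).
Proof.
move=> Ha Hu.
set S := LHS.
have HS : S = - \sum_i \sum_j a i j * einner (V j) (u i j).
  rewrite /S exchange_big /= -sumrN; apply: eq_bigr => i _.
  rewrite -sumrN; apply: eq_bigr => j _.
  by rewrite Ha Hu einnerNr mulrN.
have -> : \sum_i \sum_j a i j * einner (V j - V i) (u i j) =
  \sum_i \sum_j a i j * einner (V j) (u i j) - S.
  rewrite /S -sumrB; apply: eq_bigr => i _; rewrite -sumrB; apply: eq_bigr => j _.
  by rewrite einnerBl mulrBr.
move: HS; set T := \sum_i \sum_j _ => HS.
rewrite HS; lra.
Qed.

Lemma sum_cond_drop (F : 'I_N -> 'rV[R]_d) i : F i = 0 ->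
  \sum_(j < N | j != i) F j = \sum_j F j.
Proof. by move=> H; rewrite [RHS](bigD1 i) //= H add0r. Qed.


Definition ev X i j : 'rV[R]_d := (enorm (X j - X i))^-1 *: (X j - X i).

Lemma ev_anti X i j : ev X j i = - ev X i j.
Proof.
rewrite /ev -(opprB (X j)) enormN scalerN //.
Qed.

Lemma ev_ii X i : ev X i i = 0.
Proof. by rewrite /ev subrr scaler0. Qed.

Lemma ev_norm X i j : einner (ev X i j) (ev X i j) <= 1.
Proof.
rewrite /ev einner_Z2 -enorm_sq exprVn.
have [->|H] := eqVneq (enorm (X j - X i)) 0; first by rewrite expr0n /= invr0 mul0r ler01.
by rewrite mulVf // expf_neq0.
Qed.

Lemma energy_rate (psi : R -> R) (k0 k1 k2 : R) (dinf : 'I_N -> 'I_N -> R) X V :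
  (forall i j, dinf i j = dinf j i) -> (forall i, dinf i i = 0) ->
  \sum_i einner (V i) (cs_force psi k0 k1 k2 dinf X V i)
  + k2 / N%:R * 2^-1 * \sum_i \sum_j (enorm (X j - X i) - dinf i j) *
       (einner (X j - X i) (V j - V i) / enorm (X j - X i))
  = - (k0 / N%:R * 2^-1) * \sum_i \sum_j psi (enorm (X j - X i)) * einner (V j - V i) (V j - V i)
    - (k1 / N%:R * 2^-1) * \sum_i \sum_j einner (V j - V i) (ev X i j) ^+ 2.
Proof.
move=> Hds Hdd.
have Hr : forall i j, enorm (X i - X j) = enorm (X j - X i).
  by move=> i j; rewrite -(opprB (X j)) enormN.
have E1 : forall i, einner (V i) (cs_force psi k0 k1 k2 dinf X V i) =
   k0 / N%:R * \sum_j psi (enorm (X j - X i)) * einner (V i) (V j - V i)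
 + k1 / N%:R * \sum_j einner (V j - V i) (ev X i j) * einner (V i) (ev X i j)
 + k2 / N%:R * \sum_j (enorm (X j - X i) - dinf i j) * einner (V i) (ev X i j).
  move=> i; rewrite /cs_force /=.
  rewrite (@sum_cond_drop (fun j => einner (V j - V i) ((enorm (X j - X i))^-1 *: (X j - X i)) *:
        ((enorm (X j - X i))^-1 *: (X j - X i)))); last by rewrite /= subrr einner0l scale0r.
  rewrite (@sum_cond_drop (fun j => (enorm (X j - X i) - dinf i j) *:
        ((enorm (X j - X i))^-1 *: (X j - X i)))); last by rewrite /= subrr enorm0 Hdd subrr scale0r.
  rewrite !einnerDr !einnerZr !einner_sumr.
  by congr (_ + _ + _); congr (_ * _); apply: eq_bigr => j _; rewrite einnerZr.
under eq_bigr do rewrite E1.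
rewrite !big_split /= -!mulr_sumr.
rewrite (@symm_sum (fun i j => psi (enorm (X j - X i))) (fun i j => V j - V i) V); last 2 first.
- by move=> i j; rewrite Hr.
- by move=> i j; rewrite opprB.
rewrite (@symm_sum (fun i j => einner (V j - V i) (ev X i j)) (ev X) V); last 2 first.
- by move=> i j; rewrite (ev_anti X i j) -(opprB (V j)) einnerNl einnerNr opprK.
- by move=> i j; rewrite ev_anti.
rewrite (@symm_sum (fun i j => enorm (X j - X i) - dinf i j) (ev X) V); last 2 first.
- by move=> i j; rewrite Hr Hds.
- by move=> i j; rewrite ev_anti.
have -> : \sum_i \sum_j (enorm (X j - X i) - dinf i j) * einner (V j - V i) (ev X i j)
  = \sum_i \sum_j (enorm (X j - X i) - dinf i j) *
       (einner (X j - X i) (V j - V i) / enorm (X j - X i)).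
  apply: eq_bigr => i _; apply: eq_bigr => j _.
  by rewrite /ev einnerZr (einnerC (V j - V i)) (mulrC _^-1).
have -> : \sum_i \sum_j einner (V j - V i) (ev X i j) * einner (V j - V i) (ev X i j)
  = \sum_i \sum_j einner (V j - V i) (ev X i j) ^+ 2.
  by apply: eq_bigr => i _; apply: eq_bigr => j _; rewrite expr2.
set A := \sum_i \sum_j psi _ * _.
set B := \sum_i \sum_j _ ^+ 2.
set C := \sum_i \sum_j _ * (_ / _).
ring.
Qed.

End Alg.

Section Main.
Variables (R : realType) (N d : nat) (psi : R -> R) (psiM k0 k1 k2 : R)
  (dinf : 'I_N -> 'I_N -> R) (x v : 'I_N -> R -> 'rV[R]_d).
Implicit Types (t s : R) (i j : 'I_N).
Hypothesis HN : (2 <= N)%N.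
Hypothesis Hds : forall i j, dinf i j = dinf j i.
Hypothesis Hdd : forall i, dinf i i = 0.
Hypothesis Hpsi : forall r, 0 <= r -> 0 <= psi r <= psiM.
Hypothesis Hk0 : 0 < k0.
Hypothesis Hk1 : 0 < k1.
Hypothesis Hk2 : 0 < k2.
Hypothesis Hsol : global_smooth_solution psi k0 k1 k2 dinf x v.

Definition Xt (t : R) := fun j => x j t.
Definition Vt (t : R) := fun j => v j t.
Definition rr (t : R) i j := enorm (x j t - x i t).
Definition En (t : R) := cs_energy k2 dinf (Xt t) (Vt t).
Definition Ft (t : R) i := cs_force psi k0 k1 k2 dinf (Xt t) (Vt t) i.
Definition Pf (t : R) := \sum_i \sum_j einner (v j t - v i t) (v j t - v i t).
Definition Ed (t : R) := \sum_i einner (v i t) (Ft t i)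
  + k2 / N%:R * 2^-1 * \sum_i \sum_j (rr t i j - dinf i j) *
       (einner (x j t - x i t) (v j t - v i t) / rr t i j).

Lemma Nr_gt0 : 0 < N%:R :> R.
Proof. by rewrite ltr0n; case: N HN. Qed.

Lemma Hx t i : 0 <= t -> is_derive t 1 (x i) (v i t).
Proof. by move=> H; case: (Hsol H) => [H1 _]; exact: H1. Qed.

Lemma Hv t i : 0 <= t -> is_derive t 1 (v i) (Ft t i).
Proof. by move=> H; case: (Hsol H) => [_ [H1 _]]; exact: H1. Qed.

Lemma Hnc t i j : 0 <= t -> i != j -> x i t != x j t.
Proof. by move=> H; case: (Hsol H) => [_ [_ H1]]; exact: H1. Qed.

Lemma rr_deriv t i j : 0 <= t -> is_derive t 1 (fun s => rr s i j)
  (einner (x j t - x i t) (v j t - v i t) / rr t i j).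
Proof.
move=> Ht; have [<-|Hij] := eqVneq i j.
  rewrite /rr subrr einner0l mul0r.
  have -> : (fun s => enorm (x i s - x i s)) = (fun _ => 0).
    by apply/funext => s; rewrite subrr enorm0.
  exact: dC.
apply: denorm; last exact: dvB (Hx j Ht) (Hx i Ht).
by rewrite subr_eq0 eq_sym; apply: Hnc.
Qed.

Lemma En_eq t : En t = 2^-1 * \sum_i einner (v i t) (v i t)
  + k2 / (4 * N%:R) * \sum_i \sum_j ((rr t i j - dinf i j) * (rr t i j - dinf i j)).
Proof.
rewrite /En /cs_energy; congr (_ * _ + _ * _).
  by apply: eq_bigr => i _; rewrite enorm_sq.
Qed.

Lemma En_deriv t : 0 <= t -> is_derive t 1 En (Ed t).
Proof.
move=> Ht.
have -> : En = fun s => 2^-1 * \sum_i einner (v i s) (v i s)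
  + k2 / (4 * N%:R) * \sum_i \sum_j ((rr s i j - dinf i j) * (rr s i j - dinf i j)).
  by apply/funext => s; rewrite En_eq.
apply: is_derive_eq.
  apply: dD; apply: dZ; apply: dS => i; first exact: dinner (Hv i Ht) (Hv i Ht).
  apply: dS => j; apply: dM; apply: dB; (exact: rr_deriv || exact: dC).
rewrite /Ed; congr (_ + _).
  rewrite mulr_sumr; apply: eq_bigr => i _.
  by rewrite (einnerC (Ft t i)); field.
under eq_bigr => i _ do under eq_bigr => j _ do rewrite subr0 -mulr2n -mulr_natl.
under eq_bigr => i _ do rewrite -mulr_sumr.
rewrite -mulr_sumr.
have := Nr_gt0; set n := N%:R => Hn.
set S := \sum_i _.
by field; rewrite gt_eqF.
Qed.


Lemma Ed_eq t : Ed t =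
  - (k0 / N%:R * 2^-1) * \sum_i \sum_j psi (rr t i j) * einner (v j t - v i t) (v j t - v i t)
  - (k1 / N%:R * 2^-1) * \sum_i \sum_j einner (v j t - v i t) (ev (Xt t) i j) ^+ 2.
Proof. exact: (@energy_rate R N d psi k0 k1 k2 dinf (Xt t) (Vt t) Hds Hdd). Qed.

Lemma rr_ge0 t i j : 0 <= rr t i j.
Proof. exact: enorm_ge0. Qed.

Lemma Ed_le0 t : Ed t <= 0.
Proof.
rewrite Ed_eq.
have h1 : 0 <= \sum_i \sum_j psi (rr t i j) * einner (v j t - v i t) (v j t - v i t).
  apply: sumr_ge0 => i _; apply: sumr_ge0 => j _; apply: mulr_ge0; last exact: einner_ge0.
  by case/andP: (Hpsi (rr_ge0 t i j)).
have h2 : 0 <= \sum_i \sum_j einner (v j t - v i t) (ev (Xt t) i j) ^+ 2.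
  by apply: sumr_ge0 => i _; apply: sumr_ge0 => j _; apply: sqr_ge0.
have h3 : 0 <= k0 / N%:R * 2^-1 by rewrite !mulr_ge0 // ?invr_ge0 ?ler0n // ltW.
have h4 : 0 <= k1 / N%:R * 2^-1 by rewrite !mulr_ge0 // ?invr_ge0 ?ler0n // ltW.
move: h1 h2 h3 h4; set A := \sum_i _; set B := \sum_i _; set a := _ * _; set b := _ * 2^-1.
move=> h1 h2 h3 h4; nra.
Qed.

Lemma En_noninc s t : 0 <= s -> s <= t -> En t <= En s.
Proof.
move=> Hs Hst.
have [c /andP[Hc1 Hc2] Heq] := @mvt0 R En Ed s t Hs Hst En_deriv.
have := Ed_le0 c; have : 0 <= t - s by lra.
move: Heq; set a := Ed c => Heq h1 h2; nra.
Qed.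

Lemma En_ge0 t : 0 <= En t.
Proof.
rewrite /En /cs_energy; apply: addr_ge0.
  by apply: mulr_ge0; [rewrite invr_ge0 | apply: sumr_ge0 => i _; apply: sqr_ge0].
apply: mulr_ge0.
  by apply: mulr_ge0; [exact: ltW | rewrite invr_ge0 mulr_ge0 // ler0n].
by apply: sumr_ge0 => i _; apply: sumr_ge0 => j _; apply: sqr_ge0.
Qed.

Lemma dsum_ge1 (f : 'I_N -> 'I_N -> R) i j : (forall i j, 0 <= f i j) ->
  f i j <= \sum_i \sum_j f i j.
Proof.
move=> H.
rewrite (bigD1 i) //= (bigD1 j) //= -addrA lerDl addr_ge0 //.
  by apply: sumr_ge0 => k _.
by apply: sumr_ge0 => k _; apply: sumr_ge0 => l _.
Qed.

Lemma sum_ge_term (I : finType) (P : pred I) (g : I -> R) (j : I) : P j ->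
  (forall k : I, P k -> 0 <= g k) -> g j <= \sum_(k | P k) g k.
Proof.
move=> Pj H; rewrite (bigD1 j) //= lerDl; apply: sumr_ge0 => k /andP[Pk _]; exact: H.
Qed.

Lemma dsum_ge2 (f : 'I_N -> 'I_N -> R) i j : (forall i j, 0 <= f i j) -> i != j ->
  f i j + f j i <= \sum_i \sum_j f i j.
Proof.
move=> H Hij.
have Hrow : forall k, 0 <= \sum_l f k l by move=> k; apply: sumr_ge0.
rewrite (bigD1 i) //=.
apply: lerD; first by apply: (@sum_ge_term _ predT (f i)).
apply: le_trans (@sum_ge_term _ (fun k => k != i) (fun k => \sum_l f k l) j _ _).
- by apply: (@sum_ge_term _ predT (f j)).
- by rewrite eq_sym.
- by move=> k _.
Qed.

Definition E0 := En 0.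

Lemma E0_ge0 : 0 <= E0.
Proof. exact: En_ge0. Qed.

Lemma En_le_E0 t : 0 <= t -> En t <= E0.
Proof. by move=> Ht; apply: En_noninc. Qed.

Lemma v_bd t i : 0 <= t -> einner (v i t) (v i t) <= 2 * E0.
Proof.
move=> Ht; have := En_le_E0 Ht; rewrite En_eq.
have h1 : einner (v i t) (v i t) <= \sum_i einner (v i t) (v i t).
  by rewrite (bigD1 i) //= lerDl; apply: sumr_ge0 => k _; exact: einner_ge0.
have h2 : 0 <= k2 / (4 * N%:R) * \sum_i \sum_j ((rr t i j - dinf i j) * (rr t i j - dinf i j)).
  apply: mulr_ge0; first by apply: divr_ge0; [exact: ltW | rewrite mulr_ge0 // ler0n].
  by apply: sumr_ge0 => k _; apply: sumr_ge0 => l _; rewrite -expr2 sqr_ge0.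
move: h1 h2; set A := einner _ _; set B := \sum_i _; set C := _ * _.
move=> h1 h2; lra.
Qed.

Lemma rd_bd t i j : 0 <= t -> (rr t i j - dinf i j) ^+ 2 <= 2 * N%:R * E0 / k2.
Proof.
move=> Ht.
have HN0 := Nr_gt0.
have [<-|Hij] := eqVneq i j.
  rewrite /rr subrr enorm0 Hdd subrr expr0n /=.
  by rewrite divr_ge0 ?mulr_ge0 ?E0_ge0 // ?ltW.
have := En_le_E0 Ht; rewrite En_eq.
have h1 : 0 <= 2^-1 * \sum_i einner (v i t) (v i t).
  by rewrite mulr_ge0 // ?invr_ge0 //; apply: sumr_ge0 => k _; exact: einner_ge0.
have h2 := @dsum_ge2 (fun i j => (rr t i j - dinf i j) * (rr t i j - dinf i j)) i j.
have h3 : rr t j i = rr t i j by rewrite /rr -(opprB (x j t)) enormN.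
rewrite /= h3 (Hds j i) in h2.
have := h2 (fun i j => ltac:(rewrite -expr2; exact: sqr_ge0)) Hij => {h2} h2.
move: h1 h2; set A := \sum_i _; set B := \sum_i _; set c := rr t i j - dinf i j.
move=> h1 h2 h4.
rewrite ler_pdivlMr // expr2.
have hq : 0 <= k2 / (4 * N%:R) by rewrite divr_ge0 ?mulr_ge0 // ltW.
have h5 : k2 / (4 * N%:R) * (c * c + c * c) <= E0.
  have h6 := ler_wpM2l hq h2.
  move: h6 h4; set q := k2 / _; set P := 2^-1 * A => h6 h4; lra.
have -> : c * c * k2 = 2 * N%:R * (k2 / (4 * N%:R) * (c * c + c * c)).
  by field; rewrite gt_eqF.
rewrite ler_pM2l //; by rewrite mulr_gt0.
Qed.


Definition dmax := \big[Num.max/0]_(i < N) \big[Num.max/0]_(j < N | i != j) dinf i j.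
Definition Us := dmax + Num.sqrt (2 * N%:R * E0 / k2).

Lemma dmax_ge0 : 0 <= dmax.
Proof.
rewrite /dmax; elim/big_rec: _ => // k y _ hy; by rewrite le_max hy orbT.
Qed.

Lemma d_le_dmax i j : i != j -> dinf i j <= dmax.
Proof.
move=> Hij; rewrite /dmax; apply: le_trans (le_bigmax _ _ i).
exact: (@le_bigmax_cond _ _ _ _ j (fun j => i != j) (fun j => dinf i j) Hij).
Qed.

Lemma Us_ge0 : 0 <= Us.
Proof. by rewrite /Us addr_ge0 ?dmax_ge0 ?sqrtr_ge0. Qed.

Lemma rr_le t i j : 0 <= t -> rr t i j <= Us.
Proof.
move=> Ht; have [<-|Hij] := eqVneq i j.
  by rewrite /rr subrr enorm0 Us_ge0.
have h1 := ler_wsqrtr (rd_bd i j Ht); rewrite sqrtr_sqr in h1.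
have h2 := ler_norm (rr t i j - dinf i j).
have h3 := d_le_dmax Hij.
rewrite /Us; move: h1 h2 h3; set a := Num.sqrt _; set b := `|_|; lra.
Qed.


Lemma Ft_eq t i : Ft t i =
  (k0 / N%:R) *: \sum_j psi (rr t i j) *: (v j t - v i t)
  + (k1 / N%:R) *: \sum_j einner (v j t - v i t) (ev (Xt t) i j) *: ev (Xt t) i j
  + (k2 / N%:R) *: \sum_j (rr t i j - dinf i j) *: ev (Xt t) i j.
Proof.
rewrite /Ft /cs_force /=.
rewrite (@sum_cond_drop R N d (fun j => einner (v j t - v i t) (ev (Xt t) i j) *: ev (Xt t) i j));
  last by rewrite /= subrr einner0l scale0r.
rewrite (@sum_cond_drop R N d (fun j => (rr t i j - dinf i j) *: ev (Xt t) i j));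
  last by rewrite /= /rr subrr enorm0 Hdd subrr scale0r.
by [].
Qed.

Lemma w_bd t i j : 0 <= t -> einner (v j t - v i t) (v j t - v i t) <= 8 * E0.
Proof.
move=> Ht; have := einner_sub_le (v j t) (v i t).
have := v_bd i Ht; have := v_bd j Ht; lra.
Qed.

Definition BF := 2 * (2 * ((k0 / N%:R) ^+ 2 * (N%:R ^+ 2 * (psiM ^+ 2 * (8 * E0))))
  + 2 * ((k1 / N%:R) ^+ 2 * (N%:R ^+ 2 * (((8 * E0 + 1) / 2) ^+ 2))))
  + 2 * ((k2 / N%:R) ^+ 2 * (N%:R ^+ 2 * (2 * N%:R * E0 / k2))).

Lemma F_bd t i : 0 <= t -> einner (Ft t i) (Ft t i) <= BF.
Proof.
move=> Ht; rewrite Ft_eq.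
set A := \sum_j _; set B := \sum_j _; set C := \sum_j _.
have hA : einner A A <= N%:R ^+ 2 * (psiM ^+ 2 * (8 * E0)).
  apply: einner_sum_le => j; rewrite einner_Z2.
  have [h1 h2] := andP (Hpsi (rr_ge0 t i j)).
  apply: ler_pM; [exact: sqr_ge0 | exact: einner_ge0 | | exact: w_bd].
  by rewrite ler_sqr ?nnegrE ?(le_trans h1 h2).
have hB : einner B B <= N%:R ^+ 2 * (((8 * E0 + 1) / 2) ^+ 2).
  apply: einner_sum_le => j; rewrite einner_Z2.
  have he := ev_norm (Xt t) i j.
  have hb := einner_amgm (v j t - v i t) (ev (Xt t) i j).
  have hw := w_bd i j Ht.
  have hb2 : einner (v j t - v i t) (ev (Xt t) i j) ^+ 2 <= ((8 * E0 + 1) / 2) ^+ 2.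
    rewrite -real_normK ?num_real // ler_sqr ?nnegrE ?normr_ge0 //; last by rewrite divr_ge0 // addr_ge0 // mulr_ge0 // E0_ge0.
    move: hb he hw; set a := `|_|; set e := einner (ev _ _ _) _; set w := einner _ _ => hb he hw.
    lra.
  apply: le_trans hb2; rewrite -[X in _ <= X]mulr1 ler_wpM2l //; exact: sqr_ge0.
have hC : einner C C <= N%:R ^+ 2 * (2 * N%:R * E0 / k2).
  apply: einner_sum_le => j; rewrite einner_Z2.
  have he := ev_norm (Xt t) i j.
  apply: le_trans (rd_bd i j Ht); rewrite -[X in _ <= X]mulr1 ler_wpM2l //; exact: sqr_ge0.
apply: le_trans (einner_add_le _ _) _.
rewrite /BF lerD // ?einner_Z2; last by rewrite ler_wpM2l // ler_wpM2l // sqr_ge0.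
rewrite ler_wpM2l //; apply: le_trans (einner_add_le _ _) _.
by rewrite !einner_Z2 lerD // ler_wpM2l // ler_wpM2l // sqr_ge0.
Qed.

Lemma BF_ge0 : 0 <= BF.
Proof.
have hM : 0 <= psiM by case/andP: (Hpsi (lexx 0)) => a b; exact: le_trans b.
rewrite /BF; move: E0_ge0; generalize E0 => e h3; have := Hk2; have := Nr_gt0.
move=> h1 h2.
by rewrite ?(addr_ge0, mulr_ge0, sqr_ge0, divr_ge0, ler0n, ltW h2, ltW h1, h3, invr_ge0, ltW Hk0, ltW Hk1, hM).
Qed.

Definition Pd t := \sum_i \sum_j (einner (v j t - v i t) (Ft t j - Ft t i)
   + einner (Ft t j - Ft t i) (v j t - v i t)).

Lemma Pf_deriv t : 0 <= t -> is_derive t 1 Pf (Pd t).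
Proof.
move=> Ht; rewrite /Pf.
apply: dS => i; apply: dS => j.
exact: dinner (dvB (Hv j Ht) (Hv i Ht)) (dvB (Hv j Ht) (Hv i Ht)).
Qed.

Definition KP := \sum_(i < N) \sum_(j < N) (8 * E0 + 4 * BF) + 1.

Lemma Pd_bd t : 0 <= t -> - KP <= Pd t.
Proof.
move=> Ht; rewrite /KP opprD -sumrN.
have h : \sum_(i < N) - \sum_(j < N) (8 * E0 + 4 * BF) <= Pd t.
  rewrite /Pd; apply: ler_sum => i _; rewrite -sumrN; apply: ler_sum => j _.
  have h1 := einner_amgm (v j t - v i t) (Ft t j - Ft t i).
  have h2 := w_bd i j Ht.
  have h3 := einner_sub_le (Ft t j) (Ft t i).
  have h4 := F_bd j Ht; have h5 := F_bd i Ht.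
  have h6 := ler_norm (einner (v j t - v i t) (Ft t j - Ft t i)).
  have h7 := ler_normr (einner (v j t - v i t) (Ft t j - Ft t i)).
  rewrite (einnerC (Ft t j - Ft t i)).
  move: h1 h2 h3 h4 h5 h6; set a := einner (v j t - v i t) (Ft t j - Ft t i).
  set w := einner _ _; set g := einner (Ft t j - Ft t i) _.
  set f1 := einner (Ft t j) _; set f2 := einner (Ft t i) _.
  move=> h1 h2 h3 h4 h5 h6.
  have h8 : - a <= `|a| by rewrite -normrN ler_norm.
  lra.
lra.
Qed.


Lemma KP_gt0 : 0 < KP.
Proof.
have h : 0 <= 8 * E0 + 4 * BF by rewrite addr_ge0 // mulr_ge0 ?E0_ge0 ?BF_ge0.
rewrite /KP ltr_wpDl //; apply: sumr_ge0 => i _; exact: sumr_ge0.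
Qed.

Variable psim : R.
Hypothesis Hpsim0 : 0 < psim.
Hypothesis Hpsim : forall r, 0 <= r <= Us -> psim <= psi r.

Definition c0 := k0 / N%:R * 2^-1 * psim.

Lemma c0_gt0 : 0 < c0.
Proof. by rewrite /c0 !mulr_gt0 // ?invr_gt0 ?Nr_gt0. Qed.

Lemma Ed_le_P t : 0 <= t -> Ed t <= - c0 * Pf t.
Proof.
move=> Ht; rewrite Ed_eq.
have h1 : psim * Pf t <= \sum_i \sum_j psi (rr t i j) * einner (v j t - v i t) (v j t - v i t).
  rewrite /Pf mulr_sumr; apply: ler_sum => i _; rewrite mulr_sumr; apply: ler_sum => j _.
  apply: ler_wpM2r; first exact: einner_ge0.
  by apply: Hpsim; rewrite rr_ge0 rr_le.
have h2 : 0 <= \sum_i \sum_j einner (v j t - v i t) (ev (Xt t) i j) ^+ 2.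
  by apply: sumr_ge0 => i _; apply: sumr_ge0 => j _; apply: sqr_ge0.
have h3 : 0 < k0 / N%:R * 2^-1 by rewrite !mulr_gt0 // ?invr_gt0 ?Nr_gt0.
have h4 : 0 <= k1 / N%:R * 2^-1 by rewrite !mulr_ge0 // ?invr_ge0 ?ler0n // ltW.
rewrite /c0.
move: h1 h2 h3 h4; set A := \sum_i _; set B := \sum_i _; set a := _ * 2^-1; set b := _ * 2^-1.
set P := Pf t.
move=> h1 h2 h3 h4.
have h5 := ler_wpM2l (ltW h3) h1.
have h6 := mulr_ge0 h4 h2.
move: h5 h6; rewrite mulrA; set q := a * psim => h5 h6.
lra.
Qed.

Lemma Edrop eps t : 0 < eps -> 0 <= t -> eps <= Pf t ->
  En (t + eps / (2 * KP)) <= En t - c0 * (eps / 2) * (eps / (2 * KP)).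
Proof.
move=> He Ht HP.
have HK := KP_gt0.
set del := eps / (2 * KP).
have Hdel : 0 < del by rewrite divr_gt0 // mulr_gt0.
have Hdk : KP * del = eps / 2 by rewrite /del; field; rewrite gt_eqF.
have Hle : t <= t + del by lra.
have [c /andP[Hc1 Hc2] Heq] := @mvt0 R En Ed t (t + del) Ht Hle En_deriv.
have Hc0 : 0 <= c by lra.
have [c' /andP[Hc'1 Hc'2] Heq'] := @mvt0 R Pf Pd t c Ht Hc1 Pf_deriv.
have HPd := Pd_bd (le_trans Ht Hc'1).
have hct : 0 <= c - t by lra.
have hct2 : c - t <= del by lra.
have h1 := ler_wpM2r hct HPd.
have h2' := ler_wpM2l (ltW HK) hct2.
rewrite mulNr Hdk in h1 h2'.
have HPc : eps / 2 <= Pf c.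
  move: h1 h2' Heq'; set a := Pd c' * _; set b := KP * _ => h1 h2' Heq'; lra.
have h3 := Ed_le_P Hc0.
have h4 := ler_wpM2l (ltW c0_gt0) HPc.
have h5 : Ed c <= - (c0 * (eps / 2)) by move: h3 h4; rewrite mulNr; lra.
have h6 := ler_wpM2r (ltW Hdel) h5.
have Hd : t + del - t = del by ring.
rewrite Hd in Heq.
move: Heq h6; rewrite mulNr; set a := Ed c * del; set b := c0 * (eps / 2) * del => Heq h6.
lra.
Qed.


Lemma Pf_small eps : 0 < eps -> exists T, 0 <= T /\ forall t, T <= t -> Pf t < eps.
Proof.
move=> He; apply: contrapT => Hno.
have H' : forall T, 0 <= T -> exists t, T <= t /\ eps <= Pf t.
  move=> T HT; apply: contrapT => HT'; apply: Hno; exists T; split => // t Ht.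
  rewrite ltNge; apply/negP => He'; apply: HT'; exists t; split => //.
have HK := KP_gt0.
set del := eps / (2 * KP).
have Hdel : 0 < del by rewrite divr_gt0 // mulr_gt0.
set gam := c0 * (eps / 2) * del.
have Hgam : 0 < gam.
  have := c0_gt0; rewrite /gam => hc; apply: mulr_gt0; last exact: Hdel.
  by apply: mulr_gt0 => //; apply: divr_gt0.
have Hit : forall n : nat, exists t, 0 <= t /\ En t <= E0 - n%:R * gam.
  elim => [|n [t [Ht Hn]]].
    by exists 0; split => //; rewrite mul0r subr0.
  have [s [Hs HPs]] := H' t Ht.
  have Hs0 : 0 <= s by lra.
  exists (s + del); split; first by lra.
  have h1 := Edrop He Hs0 HPs.
  have h2 := En_noninc Ht Hs.
  rewrite -addn1 natrD mulrDl mul1r.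
  move: h1 h2 Hn; rewrite -/del -/gam; set a := n%:R * gam => h1 h2 Hn; lra.
have Hb : 0 <= E0 / gam by rewrite divr_ge0 ?E0_ge0 // ltW.
have Hbn := archi_boundP Hb.
have [t [Ht Hn]] := Hit (Num.bound (E0 / gam)).
have Hc := ltr_pM2r Hgam; 
have h := En_ge0 t.
have h2 : E0 < (Num.bound (E0 / gam))%:R * gam.
  by rewrite -ltr_pdivrMr.
move: Hn h2 h; set a := _ * gam; lra.
Qed.


Lemma antisym_sum (a : 'I_N -> 'I_N -> R) (u : 'I_N -> 'I_N -> 'rV[R]_d) :
  (forall i j, a i j = a j i) -> (forall i j, u j i = - u i j) ->
  \sum_i \sum_j a i j *: u i j = 0.
Proof.
move=> Ha Hu; set S := LHS.
have HS : S = - S.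
  rewrite {1}/S exchange_big /= /S -sumrN; apply: eq_bigr => i _.
  rewrite -sumrN; apply: eq_bigr => j _; by rewrite Ha Hu scalerN.
have : 2%:R *: S = 0 by rewrite scaler_nat mulr2n {1}HS addNr.
by move/eqP; rewrite scaler_eq0 pnatr_eq0 /= => /eqP.
Qed.

Lemma sumF0 t : \sum_i Ft t i = 0.
Proof.
have Hr : forall i j, rr t j i = rr t i j by move=> i j; rewrite /rr -(opprB (x j t)) enormN.
under eq_bigr do rewrite Ft_eq.
rewrite !big_split /= -!scaler_sumr.
rewrite (@antisym_sum (fun i j => psi (rr t i j)) (fun i j => v j t - v i t)); last 2 first.
- by move=> i j; rewrite Hr.
- by move=> i j; rewrite opprB.
rewrite (@antisym_sum (fun i j => einner (v j t - v i t) (ev (Xt t) i j)) (ev (Xt t))); last 2 first.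
- by move=> i j; rewrite (ev_anti (Xt t) i j) -(opprB (v j t)) einnerNl einnerNr opprK.
- by move=> i j; rewrite ev_anti.
rewrite (@antisym_sum (fun i j => rr t i j - dinf i j) (ev (Xt t))); last 2 first.
- by move=> i j; rewrite Hr Hds.
- by move=> i j; rewrite ev_anti.
by rewrite !scaler0 !addr0.
Qed.

Lemma momentum t : 0 <= t -> \sum_i v i t = \sum_i v i 0.
Proof.
move=> Ht; apply/matrixP => a k; rewrite (ord1 a) !summxE.
have Hd : forall s, 0 <= s -> is_derive s 1 (fun s => \sum_i v i s 0 k) (\sum_i Ft s i 0 k).
  by move=> s Hs; apply: dS => i; apply: dcomp_mx; apply: Hv.
have [c _ Heq] := @mvt0 R _ _ 0 t (lexx 0) Ht Hd.
have Hz : (\sum_i Ft c i) 0 k = 0 by rewrite sumF0 mxE.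
rewrite summxE in Hz; rewrite Hz mul0r in Heq.
by apply/eqP; rewrite -subr_eq0 Heq.
Qed.

Lemma ww_le_Pf t i j : einner (v j t - v i t) (v j t - v i t) <= Pf t.
Proof.
exact: (@dsum_ge1 (fun i j => einner (v j t - v i t) (v j t - v i t)) i j
  (fun i j => einner_ge0 _)).
Qed.

Lemma vi_le_Pf t i : \sum_i v i t = 0 -> einner (v i t) (v i t) <= Pf t.
Proof.
move=> H0.
have Hs : \sum_(j < N) (v i t - v j t) = N%:R *: v i t.
  by rewrite sumrB H0 subr0 sumr_const card_ord scaler_nat.
have := @einner_sum_le R d N (fun j => v i t - v j t) (Pf t).
rewrite Hs einner_Z2 => h.
have h2 : N%:R ^+ 2 * einner (v i t) (v i t) <= N%:R ^+ 2 * Pf t.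
  apply: h => j; rewrite -(opprB (v j t)) einnerNl einnerNr opprK; exact: ww_le_Pf.
by rewrite ler_pM2l // in h2; rewrite exprn_gt0 // Nr_gt0.
Qed.

End Main.
Unset Implicit Arguments.

Lemma bigmax0_ge0 (R : realType) n (F : 'I_n -> R) : 0 <= \big[Num.max/0]_(i < n) F i.
Proof. elim/big_rec: _ => // k y _ hy; by rewrite le_max hy orbT. Qed.

Lemma sqrt_lt_sq (R : realType) (a e : R) : 0 < e -> a < e ^+ 2 -> Num.sqrt a < e.
Proof.
move=> He Ha; rewrite -(@gtr0_norm _ e) // -sqrtr_sqr ltr_sqrt //.
by rewrite exprn_gt0.
Qed.

Theorem theorem4p2 (R : realType) (N d : nat) (psi : R -> R) (psiM : R)
  (k0 k1 k2 : R) (dinf : 'I_N -> 'I_N -> R)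
  (x v : 'I_N -> R -> 'rV[R]_d) :
  (2 <= N)%N -> (1 <= d)%N ->
  (forall i j, dinf i j = dinf j i) -> (forall i, dinf i i = 0) ->
  loc_lipschitz0 psi ->
  (forall r, 0 <= r -> 0 <= psi r <= psiM) ->
  let X0 := fun i => x i 0 in
  let V0 := fun i => v i 0 in
  let U := cs_U k2 dinf X0 V0 in
  (exists2 psim : R, 0 < psim & forall r, 0 <= r <= U -> psim <= psi r) ->
  (forall i j : 'I_N, i != j -> 0 < enorm (X0 i - X0 j)) ->
  (forall i j : 'I_N, i != j ->
     Num.sqrt (2 * N%:R * cs_energy k2 dinf X0 V0 / k2) < dinf i j) ->
  in_S U X0 ->
  0 < k0 -> 0 < k1 -> 0 < k2 ->
  global_smooth_solution psi k0 k1 k2 dinf x v ->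
  ((exists M : R, forall t : R, 0 <= t ->
      max_pair (fun i => x i t) <= M) /\
   (max_pair (fun i => v i t) @[t --> +oo] --> (0 : R))) /\
  (\sum_(i < N) V0 i = 0 ->
   max_one (fun i => v i t) @[t --> +oo] --> (0 : R)).
Proof.
move=> HN _ Hds Hdd _ Hpsi X0 V0 U [psim Hpsim0 Hpsim] _ _ _ Hk0 Hk1 Hk2 Hsol.
have HU : U = Us k2 dinf x v by [].
rewrite HU in Hpsim.
have Hsmall := Pf_small HN Hds Hdd Hpsi Hk0 Hk1 Hk2 Hsol Hpsim0 Hpsim.
split; [split|].
- exists (Us k2 dinf x v) => t Ht.
  rewrite /max_pair; apply: bigmax_le => [|i _].
    exact: Us_ge0.
  apply: bigmax_le => [|j _]; first exact: Us_ge0.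
  exact: (rr_le HN Hds Hdd Hpsi Hk0 Hk1 Hk2 Hsol i j Ht).
- apply/cvgrPdist_lt => e e0.
  have [T [HT0 HT]] := Hsmall (e ^+ 2) (exprn_gt0 2 e0).
  exists T; split; first exact: num_real.
  move=> t Ht; rewrite sub0r normrN ger0_norm; last exact: bigmax0_ge0.
  rewrite /max_pair; apply: bigmax_lt => // i _; apply: bigmax_lt => // j _.
  apply: sqrt_lt_sq => //; apply: le_lt_trans (HT t (ltW Ht)).
  exact: ww_le_Pf.
- move=> H0; apply/cvgrPdist_lt => e e0.
  have [T [HT0 HT]] := Hsmall (e ^+ 2) (exprn_gt0 2 e0).
  exists T; split; first exact: num_real.
  move=> t Ht; rewrite sub0r normrN ger0_norm; last exact: bigmax0_ge0.
  have Ht0 : 0 <= t by apply: le_trans HT0 (ltW Ht).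
  have Hm := momentum Hds Hdd Hsol Ht0.
  rewrite /max_one; apply: bigmax_lt => // i _.
  apply: sqrt_lt_sq => //; apply: le_lt_trans (HT t (ltW Ht)).
  apply: vi_le_Pf => //; rewrite Hm; exact: H0.
Qed.
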